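(* Let $n\ge1$, $k_1,k_2,\ell_2\ge0$ and $\ell_1\ge-1$ be integers with $k_1+k_2=\ell_1+\ell_2=d$ and $k_2<\ell_2$, and suppose that the pairs $(n+d+2,k_1)$, $(n+k_2+1,k_2)$, $(n+d+2,\ell_1)$, $(n+\ell_2+1,\ell_2)$ are valid. Then, regarding both sides as polynomials in $q$, the leading term of $$u(f^*(\cdot,q),n+d+2,q,k_1,k_2)-u(f^*(\cdot,q),n+d+2,q,\ell_1,\ell_2)$$ is $q^{2k_1+k_2}$; in particular $u(f^*(\cdot,q),n+d+2,q,k_1,k_2)>u(f^*(\cdot,q),n+d+2,q,\ell_1,\ell_2)$ for all sufficiently large $q$.
   Context: A pair of integers $(m,k)$ is valid if $-1\le k\le\frac{m-1}{2}$. For a function $\phi$ on integers $\ge-1$ with $\phi(-1)=0$, $m\ge1$ and valid $(m,k)$, let $u(\phi,m,q,k)=q^{2k+2}\phi(m-k-1)+\phi(k)+\bigl(\sum_{i=0}^kq^i\bigr)\bigl(\sum_{j=k}^{m-2}q^j\bigr)$ (empty sums are $0$), and for integers $k_1,k_2$ with $(m,k_1)$ and $(m-k_1-1,k_2)$ valid let $u(\phi,m,q,k_1,k_2)=q^{2k_1+2}u(\phi,m-k_1-1,q,k_2)+\phi(k_1)+\bigl(\sum_{i=0}^{k_1}q^i\bigr)\bigl(\sum_{j=k_1}^{m-2}q^j\bigr)$. Let $k^*(m)=m-2^{\lfloor\log_2 m\rfloor}$. The polynomials $f^*(m,q)$ are defined by $f^*(-1,q)=f^*(0,q)=f^*(1,q)=0$,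 $f^*(2,q)=1$, $f^*(3,q)=q^2+1$, $f^*(4,q)=q^4+2q^2+q+1$ and $f^*(m,q)=u(f^*(\cdot,q),m,q,k^*(m))$ for $m\ge5$. *)

(* Defs.v *)
From HB Require Import structures.
From mathcomp Require Import all_boot all_order all_algebra.
Set Implicit Arguments. Unset Strict Implicit. Unset Printing Implicit Defensive.
Import Order.TTheory GRing.Theory Num.Theory.
Local Open Scope ring_scope.

(* (m,k) is valid iff -1 <= k <= (m-1)/2, i.e. 2k <= m-1 *)
Definition valid (m k : int) : bool := (-1 <= k) && (k *+ 2 <= m - 1).

Definition geom (a b : nat) : {poly int} := \sum_(a <= j < b) 'X^j.

(* u(phi,m,q,k) = q^{2k+2} phi(m-k-1) + phi(k)
                  + (sum_{i=0}^k q^i)(sum_{j=k}^{m-2} q^j).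
   For k = -1 the first sum is empty, so the product is 0. *)
Definition u1 (phi : int -> {poly int}) (m k : int) : {poly int} :=
  'X^(absz (k *+ 2 + 2)) * phi (m - k - 1) + phi k
  + geom 0 (absz (k + 1)) * geom (absz k) (absz (m - 1)).

Definition u2 (phi : int -> {poly int}) (m k1 k2 : int) : {poly int} :=
  'X^(absz (k1 *+ 2 + 2)) * u1 phi (m - k1 - 1) k2 + phi k1
  + geom 0 (absz (k1 + 1)) * geom (absz k1) (absz (m - 1)).

Definition kstar (m : nat) : nat := (m - 2 ^ trunc_log 2 m)%N.

(* fuel-based well-founded recursion; fuel = m is sufficient since all
   recursive calls are on arguments < m. *)
Fixpoint fstar_aux (fuel m : nat) {struct fuel} : {poly int} :=
  match fuel with
  | 0%N => 0
  | fuel'.+1 =>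
    match m with
    | 0%N | 1%N => 0
    | 2%N => 1
    | 3%N => 'X^2 + 1
    | 4%N => 'X^4 + 'X^2 *+ 2 + 'X + 1
    | _ => u1 (fun x : int => match x with
                              | Posz j => fstar_aux fuel' j
                              | Negz _ => 0 end)
              (Posz m) (Posz (kstar m))
    end
  end.

(* f*(m,q) for m >= -1 (value 0 on negative arguments, in particular f*(-1)=0) *)
Definition fstar (m : int) : {poly int} :=
  match m with
  | Posz j => fstar_aux j.+1 j
  | Negz _ => 0
  end.

(* Main.v *)
Require Import Defs.
From HB Require Import structures.
From mathcomp Require Import all_boot all_order all_algebra.
From mathcomp Require Import zify ring lra.
Import Order.TTheory GRing.Theory Num.Theory.
Local Open Scope ring_scope.
Set Implicit Arguments. Unset Strict Implicit.



Lemma u1_ext (phi psi : int -> {poly int}) m k :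
  phi (m - k - 1) = psi (m - k - 1) -> phi k = psi k -> u1 phi m k = u1 psi m k.
Proof. by rewrite /u1 => -> ->. Qed.

Lemma kstar_lt m : (0 < m)%N -> (kstar m < m)%N.
Proof. move=> m0; rewrite /kstar; have := expn_gt0 2 (trunc_log 2 m). lia. Qed.

Lemma kstar_le m : (0 < m)%N -> ((kstar m).+1 <= m)%N.
Proof. by move/kstar_lt. Qed.

Lemma fuel_ok f1 f2 j : (j < f1)%N -> (j < f2)%N -> fstar_aux f1 j = fstar_aux f2 j.
Proof.
elim: f1 f2 j => [|f1 IH] [|f2] j //= h1 h2.
do 5! (case: j h1 h2 => [|j] h1 h2 //).
apply: u1_ext.
- case E: (_ - _ - _) => [i|i] //. apply: IH.
  + move: E; have := kstar_lt (isT : (0 < j.+4.+1)%N). lia.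
  + move: E; have := kstar_lt (isT : (0 < j.+4.+1)%N). lia.
- apply: IH; have := kstar_lt (isT : (0 < j.+4.+1)%N); lia.
Qed.



Definition F (j : nat) : {poly int} := fstar (Posz j).

Lemma fstar_aux_S f j : (4 < j)%N -> fstar_aux f.+1 j =
  u1 (fun x => match x with Posz i => fstar_aux f i | Negz _ => 0 end) (Posz j) (Posz (kstar j)).
Proof. by case: j => [|[|[|[|[|j]]]]]. Qed.

Lemma F_rec m : (5 <= m)%N ->
  F m = 'X^(kstar m + kstar m + 2) * F (m - kstar m - 1) + F (kstar m)
        + geom 0 (kstar m + 1) * geom (kstar m) (m - 1).
Proof.
move=> m5; have kl : (kstar m < m)%N by apply: kstar_lt; lia.
rewrite {1}/F /fstar fstar_aux_S // /u1.
set k := kstar _ in kl *.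
have -> : (Posz k *+ 2 + 2) = Posz (k + k + 2) by rewrite mulr2n; lia.
have -> : (Posz m - Posz k - 1) = Posz (m - k - 1) by lia.
have -> : (Posz k + 1) = Posz (k + 1) by lia.
have -> : (Posz m - 1) = Posz (m - 1) by lia.
rewrite !absz_nat.
congr (_ * _ + _ + _).
- apply: fuel_ok; lia.
- apply: fuel_ok; lia.
Qed.

Lemma F0 : F 0 = 0. Proof. by []. Qed.
Lemma F1 : F 1 = 0. Proof. by []. Qed.
Lemma F2 : F 2 = 1. Proof. by []. Qed.
Lemma F3 : F 3 = 'X^2 + 1. Proof. by []. Qed.
Lemma F4 : F 4 = 'X^4 + 'X^2 *+ 2 + 'X + 1. Proof. by []. Qed.
Lemma kstar5 : kstar 5 = 1%N. Proof. by []. Qed.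



Lemma geomS a b : (a <= b)%N -> geom a b.+1 = geom a b + 'X^b.
Proof. by move=> ab; rewrite /geom big_nat_recr. Qed.

Lemma geom_nil a b : (b <= a)%N -> geom a b = 0.
Proof. by move=> ba; rewrite /geom big_geq. Qed.

Lemma geom_shift a b : geom a.+1 b.+1 = 'X * geom a b.
Proof.
rewrite /geom big_add1 /= mulr_sumr; apply: eq_bigr => i _.
by rewrite exprS.
Qed.

Lemma geom0S b : geom 0 b.+1 = 1 + 'X * geom 0 b.
Proof. by rewrite /geom big_nat_recl // expr0 -geom_shift /geom big_add1. Qed.

Lemma geom_mul a b : (a <= b)%N -> ('X - 1) * geom a b = 'X^b - 'X^a.
Proof.
elim: b => [|b IH] ab.
  have -> : a = 0%N by lia.
  by rewrite geom_nil // mulr0 subrr.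
case: (ltnP a b.+1) => h.
  rewrite geomS; last lia.
  rewrite mulrDr IH; last lia. rewrite exprS; ring.
have -> : a = b.+1 by lia.
by rewrite geom_nil // mulr0 subrr.
Qed.

Lemma size_geom a b : (size (geom a b) <= b)%N.
Proof.
elim: b => [|b IH]; first by rewrite geom_nil // size_poly0.
case: (leqP a b) => h.
  rewrite geomS //; apply: (leq_trans (size_polyD _ _)).
  rewrite geq_max size_polyXn leqnn andbT; exact: leq_trans IH _.
by rewrite geom_nil // size_poly0.
Qed.

Lemma kstar_pred m k : (0 < m)%N -> kstar m.+1 = k.+1 -> kstar m = k.
Proof.
move=> m0; rewrite /kstar.
set t := trunc_log 2 m.+1 => e.
have h1 := trunc_logP (isT : (1 < 2)%N) (isT : (0 < m.+1)%N).
have h2 := trunc_log_ltn m.+1 (isT : (1 < 2)%N).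
rewrite -/t in h1 h2.
have -> : trunc_log 2 m = t.
  apply: trunc_log_eq => //; apply/andP; split; lia.
lia.
Qed.



Lemma size_negeom (p : {poly int}) c a b : p = - geom a b -> (b <= c)%N -> (size p <= c)%N.
Proof. by move=> -> ba; rewrite size_polyN (leq_trans (size_geom _ _)). Qed.

Lemma size_eq_le (p q : {poly int}) n : p = q -> (size q <= n)%N -> (size p <= n)%N.
Proof. by move=> ->. Qed.

Lemma geom03 : geom 0 3 = 1 + 'X + 'X^2.
Proof. by rewrite /geom !big_nat_recr //= big_geq // expr0 expr1 add0r. Qed.

Lemma dummy : True. Proof. by []. Qed.
Lemma Kstep s : (size ('X^2 * F s - F s.+1)%R <= s)%N.
Proof.
elim/ltn_ind: s => s IH.
case: s IH => [|[|[|[|[|s]]]]] IH.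
- by rewrite F0 F1 mulr0 subrr size_poly0.
- apply: (size_negeom (a:=0) (b:=1)) => //. 
  by rewrite F1 F2 /geom big_nat1 expr0 mulr0 sub0r.
- apply: (size_negeom (a:=0) (b:=1)) => //.
  rewrite F2 F3 /geom big_nat1 expr0; ring.
- apply: (size_negeom (a:=0) (b:=3)) => //.
  rewrite F3 F4 geom03; ring.
- apply: (size_negeom (a:=1) (b:=4)) => //.
  rewrite (F_rec (isT : (5 <= 5)%N)) kstar5 /= F4 F3 F1.
  have g2 : geom 0 2 = 1 + 'X by rewrite /geom !big_nat_recr //= big_geq // expr0 expr1 add0r.
  rewrite g2 geom_shift geom03.
  ring.
set m := s.+4.+1.
have m5 : (5 <= m)%N by [].
rewrite (F_rec (isT : (5 <= m.+1)%N)).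
case E: (kstar m.+1) => [|k].
- apply: (size_negeom (a:=0) (b:=m)) => //.
  rewrite !subn0 subn1 /= /geom big_nat1 F0 expr0 mul1r addn0; ring.
- have Ek : kstar m = k by apply: kstar_pred E.
  have kl : (k < m)%N by rewrite -Ek; apply: kstar_lt.
  rewrite (F_rec m5) Ek.
  have -> : (m.+1 - k.+1 - 1 = m - k - 1)%N by lia.
  have g1 : geom 0 (k.+1 + 1) = 1 + 'X * geom 0 (k + 1) by rewrite addn1 geom0S addn1.
  have g2 : geom k.+1 (m.+1 - 1) = 'X * geom k (m - 1).
    by rewrite (_ : (m.+1 - 1 = (m-1).+1)%N); [exact: geom_shift | lia].
  rewrite g1 g2.
  apply: (size_eq_le (q := ('X^2 * F k - F k.+1) + - ('X * geom k (m - 1)))).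
    by rewrite !exprD !exprS; ring.
  apply: (leq_trans (size_polyD _ _)); rewrite geq_max; apply/andP; split.
    by apply: (leq_trans (IH k kl)); apply: ltnW.
  rewrite size_polyN; apply: (leq_trans (size_polyMleq _ _)).
  rewrite size_polyX add2n /=; apply: (leq_ltn_trans (size_geom k (m - 1))); move: m5; lia.
Qed.



Lemma size_X2M (p : {poly int}) : (size ('X^2 * p)%R <= size p + 2)%N.
Proof.
apply: (leq_trans (size_polyMleq _ _)); rewrite size_polyXn.
case: (size p) => [|n] //=; lia.
Qed.

Lemma Kmulti s j :
  (size ('X^(j.+1 + j.+1) * F s - F (s + j.+1))%R <= s + j + j)%N.
Proof.
elim: j => [|j IH].
  rewrite !addn0 (addn1 s); exact: Kstep.
apply: (size_eq_le (q := 'X^2 * ('X^(j.+1 + j.+1) * F s - F (s + j.+1))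
   + ('X^2 * F (s + j.+1) - F (s + j.+1).+1))).
  rewrite (_ : (s + j.+2 = (s + j.+1).+1)%N); last lia.
  rewrite (_ : (j.+2 + j.+2 = 2 + (j.+1 + j.+1))%N); last lia.
  rewrite exprD; ring.
apply: (leq_trans (size_polyD _ _)); rewrite geq_max; apply/andP; split.
  apply: (leq_trans (size_X2M _)); move: IH; lia.
apply: (leq_trans (Kstep _)); lia.
Qed.

Lemma size_F j : (size (F j) <= j + j)%N.
Proof.
elim: j => [|j IH]; first by rewrite F0 size_poly0.
apply: (size_eq_le (q := 'X^2 * F j - ('X^2 * F j - F j.+1))).
  ring.
apply: (leq_trans (size_polyD _ _)); rewrite geq_max size_polyN; apply/andP; split.
  apply: (leq_trans (size_X2M _)); move: IH; lia.
apply: (leq_trans (Kstep _)); lia.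
Qed.



Lemma u1_nat M m k : M = Posz (m + k + 1) ->
  u1 fstar M (Posz k) = 'X^(k + k + 2) * F m + F k + geom 0 (k + 1) * geom k (m + k).
Proof.
move=> ->; rewrite /u1.
have -> : (Posz k *+ 2 + 2) = Posz (k + k + 2) by rewrite mulr2n; lia.
have -> : (Posz (m + k + 1) - Posz k - 1) = Posz m by lia.
have -> : (Posz k + 1) = Posz (k + 1) by lia.
have -> : (Posz (m + k + 1) - 1) = Posz (m + k) by lia.
by rewrite !absz_nat.
Qed.

Lemma uA n0 a s M : M = Posz (n0 + a + s + 2) ->
  u2 fstar M (Posz a) (Posz s) =
  'X^(a + a + 2) * ('X^(s + s + 2) * F n0 + F s + geom 0 (s + 1) * geom s (n0 + s))
  + F a + geom 0 (a + 1) * geom a (n0 + a + s + 1).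
Proof.
move=> ->; rewrite /u2 (@u1_nat _ n0); last by lia.
have -> : (Posz a *+ 2 + 2) = Posz (a + a + 2) by rewrite mulr2n; lia.
have -> : (Posz a + 1) = Posz (a + 1) by lia.
have -> : (Posz (n0 + a + s + 2) - 1) = Posz (n0 + a + s + 1) by lia.
by rewrite !absz_nat.
Qed.

Lemma uB n0 b t M : M = Posz (n0 + b + t + 1) ->
  u2 fstar M (Posz b - 1) (Posz t) =
  'X^(b + b) * ('X^(t + t + 2) * F n0 + F t + geom 0 (t + 1) * geom t (n0 + t))
  + fstar (Posz b - 1) + geom 0 b * geom `|Posz b - 1| (n0 + b + t).
Proof.
move=> ->; rewrite /u2 (@u1_nat _ n0); last by lia.
have -> : ((Posz b - 1) *+ 2 + 2) = Posz (b + b) by rewrite mulr2n; lia.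
have -> : (Posz b - 1 + 1) = Posz b by lia.
have -> : (Posz (n0 + b + t + 1) - 1) = Posz (n0 + b + t) by lia.
by rewrite !absz_nat.
Qed.

Lemma eventually_pos (p : {poly int}) :
  0 < lead_coef p -> exists Q : int, forall x, Q <= x -> 0 < p.[x].
Proof.
elim/poly_ind: p => [|p c IH]; first by rewrite lead_coef0.
have [->|p0] := eqVneq p 0.
  rewrite mul0r add0r lead_coefC => c0; exists 0 => x _; by rewrite hornerC.
rewrite lead_coefDl; last first.
  rewrite size_polyC size_mulX //; have : size p != 0%N by rewrite size_poly_eq0.
  case: (c != 0) => /=; lia.
rewrite lead_coefMX => /IH [Q HQ].
exists (Q * Q + c * c + 1) => x hx.
have cc : 0 <= c * c by nia.
have qq : Q < Q * Q + 1 by nia.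
have c2 : 0 < c * c + c + 1 by nia.
have h1 : 0 < p.[x] by apply: HQ; lia.
rewrite hornerD hornerMX hornerC.
have x1 : c * c + 1 <= x by nia.
have : x <= p.[x] * x by nia.
lia.
Qed.



Lemma size_add_le (p q : {poly int}) N : (size p <= N)%N -> (size q <= N)%N -> (size (p + q)%R <= N)%N.
Proof. by move=> hp hq; apply: (leq_trans (size_polyD _ _)); rewrite geq_max hp hq. Qed.

Lemma size_XnM (p : {poly int}) n : (size ('X^n * p)%R <= size p + n)%N.
Proof.
apply: (leq_trans (size_polyMleq _ _)); rewrite size_polyXn.
case: (size p) => [|k] //=; lia.
Qed.

Lemma size_Xn_le n N : (n < N)%N -> (size ('X^n : {poly int}) <= N)%N.
Proof. by rewrite size_polyXn. Qed.

Lemma gg a b c e : (a <= b)%N -> (c <= e)%N ->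
  ('X - 1) * ('X - 1) * (geom a b * geom c e) = ('X^b - 'X^a) * ('X^e - 'X^c).
Proof.
move=> ab ce; rewrite -(geom_mul ab) -(geom_mul ce); ring.
Qed.

Lemma key n0 b c s e (Fl : {poly int}) : (1 <= n0)%N -> (e <= n0 + b + (s + c + 1))%N ->
  let A := 'X^((b + c) + (b + c) + 2) * ('X^(s + s + 2) * F n0 + F s + geom 0 (s + 1) * geom s (n0 + s))
     + F (b + c) + geom 0 ((b + c) + 1) * geom (b + c) (n0 + (b + c) + s + 1) in
  let B := 'X^(b + b) * ('X^((s + c + 1) + (s + c + 1) + 2) * F n0 + F (s + c + 1)
      + geom 0 ((s + c + 1) + 1) * geom (s + c + 1) (n0 + (s + c + 1)))
     + Fl + geom 0 b * geom e (n0 + b + (s + c + 1)) in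
  ('X - 1) * ('X - 1) * (A - B) =
  ('X - 1) * ('X - 1) * ('X^(b + b) * ('X^(c.+1 + c.+1) * F s - F (s + c.+1)) + F (b + c) - Fl)
  + ('X^((b + c) + (b + c) + s + 2) - 'X^((b + c) + s + b + 1) + 'X^(b + c) - 'X^((b + c) + (b + c) + 1)
     + ('X^b - 1) * 'X^e).
Proof.
move=> n1 he A B.
have E : ('X - 1) * ('X - 1) * (A - B) =
  'X^((b + c) + (b + c) + 2) * ('X^(s + s + 2) * (('X - 1) * ('X - 1) * F n0) + ('X - 1) * ('X - 1) * F s
     + ('X - 1) * ('X - 1) * (geom 0 (s + 1) * geom s (n0 + s)))
  + ('X - 1) * ('X - 1) * F (b + c)
  + ('X - 1) * ('X - 1) * (geom 0 ((b + c) + 1) * geom (b + c) (n0 + (b + c) + s + 1))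
  - ('X^(b + b) * ('X^((s + c + 1) + (s + c + 1) + 2) * (('X - 1) * ('X - 1) * F n0)
      + ('X - 1) * ('X - 1) * F (s + c + 1)
      + ('X - 1) * ('X - 1) * (geom 0 ((s + c + 1) + 1) * geom (s + c + 1) (n0 + (s + c + 1))))
     + ('X - 1) * ('X - 1) * Fl
     + ('X - 1) * ('X - 1) * (geom 0 b * geom e (n0 + b + (s + c + 1)))).
  by rewrite /A /B; ring.
rewrite E !gg //; try lia.
rewrite (_ : (s + c.+1 = s + c + 1)%N); last lia.
rewrite !exprD !exprS ?expr0; ring.
Qed.



Lemma size_mul_le (p q : {poly int}) x y N : (size p <= x)%N -> (size q <= y)%N ->
  (x + y <= N.+1)%N -> (size (p * q)%R <= N)%N.
Proof.
move=> hp hq h; apply: (leq_trans (size_polyMleq p q)).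
have := leq_add hp hq; move: h; case: (size p + size q)%N => //= k; lia.
Qed.

Unset Implicit Arguments. Set Strict Implicit.

Theorem lemma3p42 (n k1 k2 l1 l2 d : int) :
  1 <= n -> 0 <= k1 -> 0 <= k2 -> 0 <= l2 -> -1 <= l1 ->
  k1 + k2 = d -> l1 + l2 = d -> k2 < l2 ->
  valid (n + d + 2) k1 -> valid (n + k2 + 1) k2 ->
  valid (n + d + 2) l1 -> valid (n + l2 + 1) l2 ->
  let D := u2 fstar (n + d + 2) k1 k2 - u2 fstar (n + d + 2) l1 l2 in
  [/\ size D = (absz (k1 *+ 2 + k2)).+1,
      lead_coef D = 1
    & exists Q : int, forall q : int, Q <= q ->
        (u2 fstar (n + d + 2) l1 l2).[q] < (u2 fstar (n + d + 2) k1 k2).[q]].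
Proof.
move=> hn hk1 hk2 hl2 hl1 hd1 hd2 hlt _ _ _ _.
have [n0 En] : exists n0 : nat, n = Posz n0 by exists `|n|%N; lia.
have [s Es] : exists s : nat, k2 = Posz s by exists `|k2|%N; lia.
have [t Et] : exists t : nat, l2 = Posz t by exists `|l2|%N; lia.
have [a Ea] : exists a : nat, k1 = Posz a by exists `|k1|%N; lia.
have [b Eb] : exists b : nat, l1 = (b%:Z - 1)%R by exists (absz (l1 + 1)); lia.
subst.
have [c Ec] : exists c : nat, t = (s + c + 1)%N by exists (t - s - 1)%N; lia.
subst t.
have Eac : a = (b + c)%N by lia.
subst a.
have n1 : (1 <= n0)%N by lia.
move=> D; rewrite /D.
rewrite (@uA n0 (b + c) s); last by lia.
rewrite (@uB n0 b (s + c + 1)); last by lia.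
set Fl := fstar (Posz b - 1).
set e := `|Posz b - 1|%N.
have he : (e <= n0 + b + (s + c + 1))%N by rewrite /e; lia.
have K := @key n0 b c s e Fl n1 he; cbv zeta in K.
set A := (X in _ * (X - _) = _) in K.
set B := (X in _ * (_ - X) = _) in K.
rewrite -/A -/B.
set W := ('X - 1) * ('X - 1) in K.
set Fp := ('X^(b + b) * _ + _ - _) in K.
set R := W * Fp + (- 'X^(b + c + s + b + 1) + 'X^(b + c) - 'X^(b + c + (b + c) + 1) + ('X^b - 1) * 'X^e).
have ER : W * (A - B) = 'X^(b + c + (b + c) + s + 2) + R by rewrite K /R; ring.
have mW : W \is monic by rewrite /W -polyC1 monicMl monicXsubC.
have sW3 : size W = 3%N.
  by rewrite /W size_monicM -?polyC1 ?monicXsubC ?size_XsubC // polyXsubC_eq0.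
have sW : (size W <= 3)%N by rewrite sW3.
have sFp : (size Fp <= b + c + (b + c) + s)%N.
  apply: size_add_le; first apply: size_add_le.
  - apply: (leq_trans (size_XnM _ _)).
    have := Kmulti s c; lia.
  - have := size_F (b + c); lia.
  - rewrite size_polyN /Fl; case Eb: b => [|b'].
      by rewrite (_ : Posz 0 - 1 = Negz 0) // size_poly0.
    rewrite (_ : Posz b'.+1 - 1 = Posz b'); last lia.
    apply: (leq_trans (size_F b')); lia.
clearbody W Fp.
have sR : (size R <= b + c + (b + c) + s + 2)%N.
  rewrite /R; apply: size_add_le.
    apply: (size_mul_le sW sFp); lia.
  apply: size_add_le; first apply: size_add_le; first apply: size_add_le.
  - rewrite size_polyN; apply: size_Xn_le; lia.
  - apply: size_Xn_le; lia.
  - rewrite size_polyN; apply: size_Xn_le; lia.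
  - rewrite /e; case Eb: b => [|b'].
      by rewrite expr0 subrr mul0r size_poly0.
    rewrite (_ : `|Posz b'.+1 - 1|%N = b'); last lia.
    have h1 : (size (('X^(b'.+1) - 1)%R : {poly int}) <= b'.+2)%N.
      apply: size_add_le; first by apply: size_Xn_le.
      by rewrite size_polyN size_poly1.
    have h2 : (size (('X^b')%R : {poly int}) <= b'.+1)%N by rewrite size_polyXn.
    apply: (size_mul_le h1 h2); lia.
have sE : size (W * (A - B)) = (b + c + (b + c) + s + 2).+1.
  by rewrite ER size_polyDl size_polyXn //; apply: leq_ltn_trans sR _.
have lE : lead_coef (W * (A - B)) = 1.
  by rewrite ER lead_coefDl ?lead_coefXn // size_polyXn; apply: leq_ltn_trans sR _.
have nz : A - B != 0.
  apply/eqP => h; move: sE; rewrite h mulr0 size_poly0; done.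
have lD : lead_coef (A - B) = 1 by move: lE; rewrite (lead_coef_monicM _ mW).
split.
- move: sE; rewrite size_monicM // sW3.
  rewrite (_ : (Posz (b + c)) *+ 2 + Posz s = Posz (b + c + (b + c) + s) :> int); last by rewrite mulr2n; lia.
  rewrite absz_nat add3n /= addn2 => /eqP; rewrite !eqSS => /eqP -> //.
- exact: lD.
- have lD0 : 0 < lead_coef (A - B) by rewrite lD.
  have [Q HQ] := eventually_pos lD0.
  exists Q; move=> q hq; move: (HQ q hq); rewrite hornerD hornerN subr_gt0; done.
Qed.
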